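(* Let $\mathbf{P}$ be a $g$-regular $(K,F,Z,S)$ PDA with $g=KZ/F+1\ge 2$. Then $F\ge\binom{K}{KZ/F}$.
   Context: For positive integers $K,F,Z,S$ and an integer $g$, an $F\times K$ array $\mathbf{P}=[p_{j,k}]$ whose entries are either a special symbol $*$ or one of the integers $0,1,\dots,S-1$ is a $g$-regular $(K,F,Z,S)$ PDA if: (C1) the symbol $*$ appears exactly $Z$ times in each column; (C2') each integer in $\{0,\dots,S-1\}$ appears exactly $g$ times in $\mathbf{P}$; (C3) for any two distinct entries with $p_{j_1,k_1}=p_{j_2,k_2}=s$ an integer, we have $j_1\neq j_2$, $k_1\neq k_2$, and $p_{j_1,k_2}=p_{j_2,k_1}=*$. *)

(* Defs.v *)
From mathcomp Require Import all_boot all_order all_algebra.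
Set Implicit Arguments. Unset Strict Implicit. Unset Printing Implicit Defensive.

(* A PDA is an F x K array whose entries are either the star symbol [*],
   encoded as [None], or an integer s in {0,...,S-1}, encoded as [Some s]
   with s : 'I_S. *)
Definition pda_array (F K S : nat) := 'M[option 'I_S]_(F, K).

Definition is_g_regular_PDA (K F Z S g : nat) (P : pda_array F K S) : Prop :=
  (forall k : 'I_K, #|[set j : 'I_F | P j k == None]| = Z) /\
  (forall s : 'I_S,
      #|[set jk : 'I_F * 'I_K | P jk.1 jk.2 == Some s]| = g) /\
  (forall (j1 j2 : 'I_F) (k1 k2 : 'I_K) (s : 'I_S),
      (j1, k1) != (j2, k2) ->
      P j1 k1 = Some s -> P j2 k2 = Some s ->
      [/\ j1 != j2, k1 != k2, P j1 k2 = None & P j2 k1 = None]).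
Arguments is_g_regular_PDA : clear implicits.

(* Main.v *)
Require Import Defs.
From mathcomp Require Import all_boot all_order all_algebra.
From mathcomp Require Import zify.
Set Implicit Arguments. Unset Strict Implicit. Unset Printing Implicit Defensive.

Section PDA.
Variables (K F S : nat) (P : pda_array F K S) (g : nat).
Hypothesis C2 : forall s : 'I_S, #|[set jk : 'I_F * 'I_K | P jk.1 jk.2 == Some s]| = g.
Hypothesis C3 : forall (j1 j2 : 'I_F) (k1 k2 : 'I_K) (s : 'I_S),
      (j1, k1) != (j2, k2) -> P j1 k1 = Some s -> P j2 k2 = Some s ->
      [/\ j1 != j2, k1 != k2, P j1 k2 = None & P j2 k1 = None].

Definition star j := [set k | P j k == None].
Definition cells s := [set jk : 'I_F * 'I_K | P jk.1 jk.2 == Some s].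

Lemma snd_inj s : {in cells s &, injective (@snd 'I_F 'I_K)}.
Proof.
move=> [j1 k1] [j2 k2]; rewrite !inE /= => /eqP h1 /eqP h2 e.
apply/eqP; apply/negPn/negP => ne.
by case: (C3 ne h1 h2) => _ /eqP ne' _ _; apply: ne'.
Qed.

Lemma other_cols_star j k s : P j k = Some s ->
  [set jk.2 | jk in cells s :\ (j,k)] \subset star j.
Proof.
move=> hjk; apply/subsetP => x /imsetP [[r c]]; rewrite !inE /= => /andP [ne /eqP hrc] ->.
case: (C3 (j1:=j) (j2:=r) (k1:=k) (k2:=c) (s:=s) _ hjk hrc) => [|_ _ -> _ //].
by rewrite eq_sym.
Qed.

Lemma card_img j k s : P j k = Some s ->
  #|[set jk.2 | jk in cells s :\ (j,k)]| = g.-1.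
Proof.
move=> hjk; rewrite card_in_imset; last first.
  move=> x y /setD1P[_ hx] /setD1P[_ hy]; move=> e; exact: (snd_inj hx hy e).
have := cardsD1 (j,k) (cells s); rewrite /cells C2 inE /= hjk eqxx /=.
by move=> ->.
Qed.

Lemma star_ge j k s : P j k = Some s -> g.-1 <= #|star j|.
Proof. by move=> h; rewrite -(card_img h); apply: subset_leq_card; apply: other_cols_star. Qed.

Lemma g_le_K (s : 'I_S) : g <= K.
Proof.
rewrite -(C2 s) -[X in _ <= X]card_ord -(card_in_imset (@snd_inj s)).
exact: max_card.
Qed.

Hypothesis hall : forall j, #|star j| = g.-1.

Lemma swap j c k : c \in star j -> k \notin star j ->
  exists r, star r = k |: (star j :\ c).
Proof.
move=> hc hk.
case hjk: (P j k) => [s|]; last by move: hk; rewrite inE hjk.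
have himg : [set jk.2 | jk in cells s :\ (j,k)] = star j.
  apply/eqP; rewrite eqEcard other_cols_star //= hall card_img //.
move: (hc); rewrite -himg => /imsetP [[r c'] /setD1P [ne hrc] /= ec].
subst c'; move: hrc; rewrite inE /= => /eqP hrc.
exists r; apply/eqP; rewrite eq_sym eqEcard; apply/andP; split.
  apply/subsetP => x; rewrite in_setU1 => /orP [/eqP -> | hx].
    have hck : c != k by apply/eqP => e; move: hk; rewrite -e hc.
    case: (C3 (j1:=r) (j2:=j) (k1:=c) (k2:=k) (s:=s) _ hrc hjk) => [|_ _ h _].
      by rewrite xpair_eqE (negbTE hck) andbF.
    by rewrite inE h.
  move: hx; rewrite in_setD1 => /andP [hxc hx].
  move: (hx) => /imsetP [[r' x'] /setD1P [ne' hrx] /= ex].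
  subst x'; move: hrx; rewrite inE /= => /eqP hrx.
  case: (C3 (j1:=r) (j2:=r') (k1:=c) (k2:=x) (s:=s) _ hrc hrx) => [|_ _ h _].
    have hcx : (c == x) = false by rewrite eq_sym (negbTE hxc).
    by rewrite xpair_eqE hcx andbF.
  by rewrite inE h.
rewrite himg; have h := cardsD1 c (star j); rewrite hc hall in h.
rewrite cardsU1 hall in_setD1 (negbTE hk) andbF /=.
by rewrite h.
Qed.

Lemma reach n : forall A B : {set 'I_K}, B \in [set star j | j : 'I_F] ->
  #|A| = g.-1 -> #|A :\: B| = n -> A \in [set star j | j : 'I_F].
Proof.
elim: n => [|n IH] A B /imsetP [j _ ->] hA hD.
  have sub : A \subset star j by rewrite -setD_eq0 -cards_eq0 hD.
  have eA : A = star j.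
    apply/eqP; rewrite eqEcard sub hA hall. by rewrite leqnn.
  rewrite eA.
  exact: imset_f.
have : 0 < #|A :\: star j| by rewrite hD.
rewrite card_gt0 => /set0Pn [k]; rewrite inE => /andP [kj kA].
have : 0 < #|star j :\: A| by rewrite cardsD setIC hall -hA -cardsD hD.
rewrite card_gt0 => /set0Pn [c]; rewrite inE => /andP [cA cj].
have [r hr] := swap cj kj.
apply: (IH A (star r)); [exact: imset_f | exact: hA |].
have e : A :\: star r = (A :\: star j) :\ k.
  rewrite hr; apply/setP => x; rewrite !inE.
  case: (eqVneq x c) => [->|_]; first by rewrite (negbTE cA) !andbF.
  by case: (x == k); case: (x \in star j).
move: hD; rewrite e (cardsD1 k) inE kA kj /=.
by case.
Qed.

End PDA.

Theorem theorem3 (K F Z S g : nat) (P : pda_array F K S) :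
  0 < K -> 0 < F -> 0 < Z -> 0 < S ->
  is_g_regular_PDA K F Z S g P ->
  (F %| K * Z)%N ->
  g = (K * Z %/ F).+1 ->
  2 <= g ->
  'C(K, K * Z %/ F) <= F.
Proof.
move=> hK hF hZ hS [C1 [C2 C3]] hdiv hg hg2.
set t := K * Z %/ F in hg *.
have htF : t * F = K * Z by rewrite divnK.
have hgK : g <= K := g_le_K C2 C3 (Ordinal hS).
have hsum : \sum_(j < F) #|star P j| = K * Z.
  transitivity (\sum_(j < F) \sum_(k < K) (P j k == None : nat)).
    apply: eq_bigr => j _; rewrite -sum1_card big_mkcond /=.
    by apply: eq_bigr => k _; rewrite inE; case: (P j k == None).
  rewrite exchange_big /=; transitivity (\sum_(k < K) Z); last first.
    by rewrite sum_nat_const card_ord.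
  apply: eq_bigr => k _; rewrite -(C1 k) -sum1_card [RHS]big_mkcond /=.
  by apply: eq_bigr => j _; rewrite inE; case: (P j k == None).
have hrow : forall j, t <= #|star P j|.
  move=> j; case: (pickP (fun k => P j k != None)) => [k|] hk.
    case e: (P j k) hk => [s|] // _; have := star_ge C2 C3 e; by rewrite hg.
  have -> : star P j = setT.
    by apply/setP => k; rewrite !inE; move: (hk k) => /= /negbFE.
  by rewrite cardsT card_ord; apply: leq_trans hgK; rewrite hg leqnSn.
have hall : forall j, #|star P j| = g.-1.
  move=> j; rewrite hg /=; apply/eqP; rewrite eqn_leq hrow andbT.
  rewrite leqNgt; apply/negP => hlt.
  have : \sum_(i < F) t < \sum_(i < F) #|star P i|.
    rewrite (bigD1 j) //= [X in _ < X](bigD1 j) //= -addSn.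
    apply: leq_add hlt _; exact: leq_sum (fun i _ => hrow i).
  by rewrite sum_nat_const card_ord hsum -htF mulnC ltnn.
pose T := [set star P j | j : 'I_F].
have hT : forall A : {set 'I_K}, #|A| = t -> A \in T.
  move=> A hA.
  apply: (reach C2 C3 hall (B := star P (Ordinal hF)) (n := #|A :\: star P (Ordinal hF)|)) => //.
    exact: imset_f.
  by rewrite hA hg.
rewrite -[K in 'C(K, _)]card_ord -card_draws.
have s1 : [set A : {set 'I_K} | #|A| == t] \subset T.
  by apply/subsetP => A; rewrite inE => /eqP; exact: hT.
apply: leq_trans (subset_leq_card s1) _.
apply: leq_trans (leq_imset_card _ _) _.
by rewrite card_ord.
Qed.
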